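(* Let $(c_t)_{t=0}^\infty\subset\mathbb{S}^1$ be a sequence of unit vectors in $\mathbb{R}^2$ and $\omega:\mathsf{P}^2_+\to\mathbb{R}_{\ge0}$ a function with $\omega(X)\le C\sqrt{\lambda_{\max}(X)}$ for all $X\in\mathsf{P}^2_+$, for some constant $C>0$. Let $\lambda_0\ge4\sqrt2\,C+2$ and define $V_t\in\mathbb{R}^{2\times2}$ by $$V_0=\lambda_0\mathbb{I}_{2\times2},\qquad V_{t+1}=V_t+\omega(V_t)\big(a^+_{t+1}(a^+_{t+1})^{\mathsf T}+a^-_{t+1}(a^-_{t+1})^{\mathsf T}\big),$$ where $$a^\pm_{t+1}=\frac{c_t\pm\frac{1}{\sqrt{\lambda_{\min}(V_t)}}v_{t,\min}}{\sqrt{1\pm\frac{2\langle c_t,v_{t,\min}\rangle}{\sqrt{\lambda_{\min}(V_t)}}+\frac{1}{\lambda_{\min}(V_t)}}}$$ and $v_{t,\min}$ is a normalized eigenvector of $V_t$ for its minimum eigenvalue. Then $\lambda_{\min}(V_t)\ge\sqrt{2\lambda_{\max}(V_t)}$ for all $t\ge0$.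
   Context: $\mathsf{P}^2_+$ denotes the set of real positive semidefinite $2\times2$ matrices; $\lambda_{\min},\lambda_{\max}$ are the minimal and maximal eigenvalues. *)

(* Defs.v *)
From HB Require Import structures.
From mathcomp Require Import all_boot all_order all_algebra.
From mathcomp Require Import boolp classical_sets reals.
Set Implicit Arguments. Unset Strict Implicit. Unset Printing Implicit Defensive.
Import Order.TTheory GRing.Theory Num.Theory.
Local Open Scope ring_scope.
Local Open Scope classical_set_scope.

Section Defs.
Variable R : realType.

Definition dot2 (u v : 'rV[R]_2) : R := (u *m v^T) 0 0.

Definition psd2 (X : 'M[R]_2) : Prop :=
  X^T = X /\ forall x : 'rV[R]_2, 0 <= (x *m X *m x^T) 0 0.

(* minimal / maximal eigenvalue (eigenvalue from mxalgebra).
   Chosen by xget among the eigenvalues; meaningful when eigenvalues exist,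
   e.g. for symmetric real matrices. *)
Definition lambda_min (X : 'M[R]_2) : R :=
  xget 0 [set l | eigenvalue X l /\ forall m, eigenvalue X m -> l <= m].
Definition lambda_max (X : 'M[R]_2) : R :=
  xget 0 [set l | eigenvalue X l /\ forall m, eigenvalue X m -> m <= l].

Definition a_plus (c v : 'rV[R]_2) (l : R) : 'rV[R]_2 :=
  (Num.sqrt (1 + 2 * dot2 c v / Num.sqrt l + 1 / l))^-1
    *: (c + (Num.sqrt l)^-1 *: v).
Definition a_minus (c v : 'rV[R]_2) (l : R) : 'rV[R]_2 :=
  (Num.sqrt (1 - 2 * dot2 c v / Num.sqrt l + 1 / l))^-1
    *: (c - (Num.sqrt l)^-1 *: v).

Definition outer (a : 'rV[R]_2) : 'M[R]_2 := a^T *m a.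

End Defs.

(* Main.v *)
Require Import Defs.
From HB Require Import structures.
From mathcomp Require Import all_boot all_order all_algebra.
From mathcomp Require Import boolp classical_sets reals.
From mathcomp Require Import ring lra.
Import Order.TTheory GRing.Theory Num.Theory.
Local Open Scope ring_scope.

Lemma subr_ge0_P (R' : realDomainType) (x y : R') : x <= y -> 0 <= y - x.
Proof. by rewrite subr_ge0. Qed.
Section SA.
Context {R : realType}.

Lemma step_ineq (C l0 l L w al d s ip im : R) :
 0 < C -> 4 * Num.sqrt 2 * C + 2 <= l0 -> l0 <= l -> l <= L -> 2 * L <= l^+2 ->
 0 <= w -> w <= C * Num.sqrt L ->
 al^+2 + d^+2 = 1 -> 0 < s -> s^+2 * l = 1 ->
 ip * (al^+2 + (d+s)^+2) = 1 -> im * (al^+2+(d-s)^+2) = 1 ->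
 exists m, l <= m /\ 2 * m <= L + l + w*(al^+2*(ip+im) + ((d+s)^+2*ip + (d-s)^+2*im)) /\
  0 <= m^+2 - (L + l + w*(al^+2*(ip+im) + ((d+s)^+2*ip + (d-s)^+2*im))) * m
        + ((L + w*(al^+2*(ip+im)))*(l + w*((d+s)^+2*ip + (d-s)^+2*im))
            - (w*(al*((d+s)*ip + (d-s)*im)))^+2) /\
  2*(L + l + w*(al^+2*(ip+im) + ((d+s)^+2*ip + (d-s)^+2*im))) <= m^+2 + 2 * m.
Proof.
move=> C0 hl0 l0l lL Ll w0 wC ad s0 sl hip him.
set P11 := al^+2*(ip+im).
set P22 := (d+s)^+2*ip + (d-s)^+2*im.
set P12 := al*((d+s)*ip + (d-s)*im).
have Hsum : P11 + P22 = 2 by rewrite /P11 /P22; nra.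
have r2 := sqrtr_ge0 (2:R).
have r2sq : Num.sqrt (2:R) ^+ 2 = 2 by rewrite sqr_sqrtr.
have sL0 := sqrtr_ge0 L.
have l2 : 2 <= l.
  have : 0 <= Num.sqrt 2 * C by apply: mulr_ge0 => //; exact: ltW.
  nra.
have L0 : 0 <= L by lra.
have sLsq : Num.sqrt L ^+ 2 = L by rewrite sqr_sqrtr.
have s2lt : s^+2 < 1 by nra.
have np0 : 0 < al^+2 + (d+s)^+2.
  rewrite ltNge; apply/negP => h.
  have a0 : al^+2 = 0 by apply/eqP; rewrite eq_le sqr_ge0 andbT; nra.
  have b0 : (d+s)^+2 = 0 by apply/eqP; rewrite eq_le sqr_ge0 andbT; nra.
  have : d + s = 0 by apply/eqP; rewrite -sqrf_eq0; apply/eqP.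
  nra.
have nm0 : 0 < al^+2 + (d-s)^+2.
  rewrite ltNge; apply/negP => h.
  have a0 : al^+2 = 0 by apply/eqP; rewrite eq_le sqr_ge0 andbT; nra.
  have b0 : (d-s)^+2 = 0 by apply/eqP; rewrite eq_le sqr_ge0 andbT; nra.
  have : d - s = 0 by apply/eqP; rewrite -sqrf_eq0; apply/eqP.
  nra.
have ip0 : 0 < ip by nra.
have im0 : 0 < im by nra.
have Q : P11 * P22 - P12^+2 = 4 * s^+2 * al^+2 * ip * im by rewrite /P11 /P22 /P12; ring.
have Q0 : 0 <= 4 * s^+2 * al^+2 * ip * im.
  apply: mulr_ge0; last exact: ltW.
  apply: mulr_ge0; last exact: ltW.
  apply: mulr_ge0; last exact: sqr_ge0.
  by apply: mulr_ge0 => //; apply: sqr_ge0.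
have P11ge0 : 0 <= P11 by rewrite /P11; apply: mulr_ge0; [exact: sqr_ge0|lra].
have P22ge0 : 0 <= P22 by rewrite /P22; apply: addr_ge0; apply: mulr_ge0; rewrite ?sqr_ge0 ?ltW.
have nsum : (al^+2 + (d+s)^+2) + (al^+2 + (d-s)^+2) = 2 * (1 + s^+2) by nra.
have ipim : ip + im = 2 * (1 + s^+2) * ip * im.
  have e1 : ip = ip * im * (al^+2 + (d-s)^+2) by nra.
  have e2 : im = ip * im * (al^+2 + (d+s)^+2) by nra.
  nra.
have nprod : (al^+2 + (d+s)^+2) * (al^+2 + (d-s)^+2) = (1+s^+2)^+2 - 4 * s^+2 * d^+2 by nra.
have ipimn : ip * im * ((1+s^+2)^+2 - 4 * s^+2 * d^+2) = 1.
  by rewrite -nprod; nra.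
have s2 : s^+2 <= 1 by nra.
have Key1 : 2 <= P22 * (l + 1).
  have h1 : P11 * (1 + s^+2) <= 2.
    rewrite /P11 ipim.
    have f1 : 0 <= d^+2 * ((1 + s ^+ 2) ^+ 2 - 4 * s ^+ 2).
      apply: mulr_ge0; [exact: sqr_ge0|nra].
    have pp : 0 <= ip * im by apply: mulr_ge0; apply: ltW.
    have H := mulr_ge0 pp f1.
    have -> : al^+2 = 1 - d^+2 by lra.
    move: H ipimn; clear; move=> H ipimn; nra.
  have : P11 * (l + 1) <= 2 * l.
    have e : P11 * (l+1) * s^+2 = P11 * (s^+2 * l + s^+2) by ring.
    rewrite sl in e.
    nra.
  nra.
set F := l^+2 - 2 * L.
have F0 : 0 <= F by rewrite /F; lra.
have lp1 : 0 < l + 1 by lra.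
case: (lerP (4 * w) F) => hF.
  exists l; split; first lra.
  rewrite Hsum; split; first lra.
  split; last by rewrite /F in hF; lra.
  have -> : l ^+ 2 - (L + l + w * 2) * l +
      ((L + w * P11) * (l + w * P22) - (w * P12) ^+ 2)
      = (L - l) * w * P22 + w^+2 * (P11 * P22 - P12^+2).
    rewrite -Hsum; ring.
  rewrite Q.
  apply: addr_ge0; [apply: mulr_ge0; [apply: mulr_ge0|] |apply: mulr_ge0] => //; try lra.
  exact: sqr_ge0.
set dl := (4 * w - F) / (2 * (l + 1)).
have dle : dl * (2 * (l + 1)) = 4 * w - F by rewrite /dl mulfVK //; lra.
have dl0 : 0 < dl by rewrite /dl divr_gt0 //; lra.
have dlw : dl * (l + 1) <= 2 * w.
  have : dl * (2 * (l + 1)) = 2 * (dl * (l + 1)) by ring.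
  lra.
have sLr2 : Num.sqrt L * Num.sqrt 2 <= l.
  have h1 : (Num.sqrt L * Num.sqrt 2)^+2 <= l^+2 by rewrite exprMn sLsq r2sq; lra.
  have h2 : 0 <= Num.sqrt L * Num.sqrt 2 by apply: mulr_ge0.
  rewrite -(ler_pXn2r (n := 2)) // nnegrE; lra.
have w4 : 4 * w * 2 <= (l - 2) * l.
  have h1 : 4 * w * Num.sqrt 2 <= (l - 2) * Num.sqrt L.
    clear -wC r2 hl0 l0l sL0 C0 w0.
    nra.
  have h2 : 4 * w * 2 <= (l - 2) * (Num.sqrt L * Num.sqrt 2).
    rewrite -{1}r2sq.
    clear -h1 r2.
    nra.
  have : (l - 2) * (Num.sqrt L * Num.sqrt 2) <= (l - 2) * l.
    by apply: ler_wpM2l; lra.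
  lra.
have dlG : dl <= L - l.
  rewrite -(ler_pM2r (_ : 0 < 2 * (l + 1))); last lra.
  rewrite dle /F.
  have : l * l <= l * L by apply: ler_wpM2l; lra.
  have : (L - l) * (2 * (l + 1)) = 2 * l * L + 2 * L - 2 * l * l - 2 * l by ring.
  have : l ^+ 2 = l * l by ring.
  lra.
have dlP : dl <= w * P22.
  rewrite -(ler_pM2r lp1).
  have : 2 * w <= w * P22 * (l + 1).
    have : w * 2 <= w * (P22 * (l + 1)) by apply: ler_wpM2l.
    have : w * (P22 * (l + 1)) = w * P22 * (l + 1) by ring.
    lra.
  lra.
have dlw2 : dl <= 2 * w.
  have : 0 <= dl * l by apply: mulr_ge0; lra.
  have : dl * (l + 1) = dl * l + dl by ring.
  lra.
exists (l + dl); split; first lra.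
rewrite Hsum; split; first lra.
split; last first.
  have : (l + dl) ^+ 2 + 2 * (l + dl) - 2 * (L + l + w * 2) = dl ^+ 2 + dl * (2 * (l + 1)) + F - 4 * w.
    rewrite /F; ring.
  rewrite dle.
  have := sqr_ge0 dl.
  lra.
have -> : (l + dl) ^+ 2 - (L + l + w * 2) * (l + dl) +
      ((L + w * P11) * (l + w * P22) - (w * P12) ^+ 2)
  = (L - l - dl) * (w * P22 - dl) + w * (w * (P11 * P22 - P12^+2) - dl * P11).
  rewrite -Hsum; ring.
rewrite Q.
have K2 : dl * P11 <= w * (4 * s ^+ 2 * al ^+ 2 * ip * im).
  rewrite /P11 ipim.
  have h3 : dl * (1 + s^+2) <= 2 * w * s^+2.
    have e : dl * (l+1) * s^+2 = dl * (s^+2 * l + s^+2) by ring.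
    rewrite sl in e.
    have : dl * (l + 1) * s^+2 <= 2 * w * s^+2 by apply: ler_wpM2r => //; exact: sqr_ge0.
    lra.
  have h4 : 0 <= al^+2 * ip * im.
    apply: mulr_ge0; last exact: ltW.
    apply: mulr_ge0; [exact: sqr_ge0|exact: ltW].
  have := ler_wpM2r h4 h3.
  have : dl * (al ^+ 2 * (2 * (1 + s ^+ 2) * ip * im)) = dl * (1 + s ^+ 2) * (al ^+ 2 * ip * im) * 2 by ring.
  have : w * (4 * s ^+ 2 * al ^+ 2 * ip * im) = 2 * w * s ^+ 2 * (al ^+ 2 * ip * im) * 2 by ring.
  lra.
apply: addr_ge0; apply: mulr_ge0; try lra.
Qed.
End SA.


Section SB.
Context {R : realType}.
Implicit Types (M : 'M[R]_2).

Lemma l12 : lift ord0 ord0 = 1 :> 'I_2. Proof. by apply: val_inj. Qed.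

Lemma mulrow2 (v : 'rV[R]_2) M j : (v *m M) 0 j = v 0 0 * M 0 j + v 0 1 * M 1 j.
Proof. by rewrite !mxE !big_ord_recl big_ord0 addr0 l12. Qed.

Lemma dot2E (u v : 'rV[R]_2) : dot2 u v = u 0 0 * v 0 0 + u 0 1 * v 0 1.
Proof. by rewrite /dot2 !mxE !big_ord_recl big_ord0 addr0 !mxE l12. Qed.

Lemma outerE (a : 'rV[R]_2) i j : outer a i j = a 0 i * a 0 j.
Proof. by rewrite /outer !mxE big_ord1 !mxE. Qed.

Definition disc M := (M 0 0 - M 1 1)^+2 / 4 + M 0 1 ^+ 2.
Definition lminf M := (M 0 0 + M 1 1) / 2 - Num.sqrt (disc M).
Definition lmaxf M := (M 0 0 + M 1 1) / 2 + Num.sqrt (disc M).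

Lemma disc_ge0 M : 0 <= disc M.
Proof. rewrite /disc; apply: addr_ge0; last exact: sqr_ge0.
apply: divr_ge0 => //; exact: sqr_ge0. Qed.

Lemma row2_eq0 (v : 'rV[R]_2) : v 0 0 = 0 -> v 0 1 = 0 -> v = 0.
Proof.
move=> h0 h1; apply/matrixP => i j; rewrite ord1 mxE.
case: j => [[|[|k]]] Hk //=.
- by rewrite (_ : Ordinal Hk = 0) //; apply: val_inj.
- by rewrite (_ : Ordinal Hk = 1) //; apply: val_inj.
Qed.

Definition vec2 (p q : R) : 'rV[R]_2 := \row_(j < 2) (if j == 0 then p else q).
Lemma vec2_0 p q : vec2 p q 0 0 = p. Proof. by rewrite mxE. Qed.
Lemma vec2_1 p q : vec2 p q 0 1 = q. Proof. by rewrite mxE. Qed.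

Lemma row2_eq (u v : 'rV[R]_2) : u 0 0 = v 0 0 -> u 0 1 = v 0 1 -> u = v.
Proof.
move=> h0 h1; apply/eqP; rewrite -subr_eq0; apply/eqP; apply: row2_eq0;
by rewrite !mxE ?h0 ?h1 subrr.
Qed.

Lemma eig_char M x : M 1 0 = M 0 1 ->
  eigenvalue M x <-> (M 0 0 - x) * (M 1 1 - x) = M 0 1 ^+ 2.
Proof.
move=> hs; split.
  case/eigenvalueP => v hv vn0.
  have e0 : (v *m M) 0 0 = (x *: v) 0 0 by rewrite hv.
  have e1 : (v *m M) 0 1 = (x *: v) 0 1 by rewrite hv.
  rewrite mulrow2 mxE in e0; rewrite mulrow2 mxE in e1.
  rewrite hs in e0.
  set D := (M 0 0 - x) * (M 1 1 - x) - M 0 1 ^+ 2.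
  have d0 : D * v 0 0 = 0.
    have -> : D * v 0 0 = (M 1 1 - x) * (v 0 0 * M 0 0 + v 0 1 * M 0 1 - x * v 0 0)
       - M 0 1 * (v 0 0 * M 0 1 + v 0 1 * M 1 1 - x * v 0 1) by rewrite /D; ring.
    by rewrite e0 e1 !subrr; ring.
  have d1 : D * v 0 1 = 0.
    have -> : D * v 0 1 = (M 0 0 - x) * (v 0 0 * M 0 1 + v 0 1 * M 1 1 - x * v 0 1)
       - M 0 1 * (v 0 0 * M 0 0 + v 0 1 * M 0 1 - x * v 0 0) by rewrite /D; ring.
    by rewrite e0 e1 !subrr; ring.
  have [hD|hD] := eqVneq D 0.
    by apply/eqP; rewrite -subr_eq0 -/D hD.
  move/negP: vn0 => vn0; exfalso; apply: vn0; apply/eqP; apply: row2_eq0.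
  - by move/eqP: d0; rewrite mulf_eq0 (negbTE hD) => /eqP.
  - by move/eqP: d1; rewrite mulf_eq0 (negbTE hD) => /eqP.
move=> h; apply/eigenvalueP.
have [b0|bn0] := eqVneq (M 0 1) 0.
  have [xa|xna] := eqVneq x (M 0 0).
    exists (vec2 1 0); last first.
      by apply/negP => /eqP h0; have := vec2_0 1 0; rewrite h0 mxE => /esym/eqP; rewrite oner_eq0.
    apply: row2_eq; rewrite mulrow2 !mxE /= ?hs ?b0 ?xa; ring.
  have xc : x = M 1 1.
    move: h; rewrite b0 expr0n /= => /eqP; rewrite mulf_eq0 !subr_eq0 => /orP [/eqP h|/eqP h].
      by move: xna; rewrite h eqxx.
    by rewrite h.
  exists (vec2 0 1); last first.
    by apply/negP => /eqP h0; have := vec2_1 0 1; rewrite h0 mxE => /esym/eqP; rewrite oner_eq0.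
  apply: row2_eq; rewrite mulrow2 !mxE /= ?hs ?b0 ?xc; ring.
exists (vec2 (M 0 1) (x - M 0 0)); last first.
  by apply/negP => /eqP h0; have := vec2_0 (M 0 1) (x - M 0 0); rewrite h0 mxE => /esym/eqP; rewrite (negbTE bn0).
apply: row2_eq; rewrite mulrow2 !mxE /= ?hs.
- ring.
- lra.
Qed.

Lemma quad_id M x : (M 0 0 - x) * (M 1 1 - x) - M 0 1 ^+ 2
  = (x - (M 0 0 + M 1 1) / 2)^+2 - disc M.
Proof. rewrite /disc; by field. Qed.

Lemma eig_bounds M x : M 1 0 = M 0 1 -> eigenvalue M x -> lminf M <= x <= lmaxf M.
Proof.
move=> hs /(eig_char _ _ hs) h.
have := quad_id M x; rewrite h subrr => /esym/eqP; rewrite subr_eq0 => /eqP e.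
have r0 := sqrtr_ge0 (disc M).
have r2 := sqr_sqrtr (disc_ge0 M).
have ed : disc M = (x - (M 0 0 + M 1 1) / 2) ^+ 2 by rewrite e.
rewrite /lminf /lmaxf ed sqrtr_sqr.
have [hx|hx] := lerP 0 (x - (M 0 0 + M 1 1) / 2).
  by rewrite ger0_norm //; apply/andP; split; lra.
by rewrite ltr0_norm //; apply/andP; split; lra.
Qed.

Lemma lminf_eig M : M 1 0 = M 0 1 -> eigenvalue M (lminf M).
Proof.
move=> hs; apply/(eig_char _ _ hs); apply/eqP; rewrite -subr_eq0 quad_id /lminf.
have r2 := sqr_sqrtr (disc_ge0 M).
apply/eqP; set r := Num.sqrt _; rewrite -r2 -/r; ring.
Qed.

Lemma lmaxf_eig M : M 1 0 = M 0 1 -> eigenvalue M (lmaxf M).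
Proof.
move=> hs; apply/(eig_char _ _ hs); apply/eqP; rewrite -subr_eq0 quad_id /lmaxf.
have r2 := sqr_sqrtr (disc_ge0 M).
apply/eqP; set r := Num.sqrt _; rewrite -r2 -/r; ring.
Qed.

Lemma lambda_minE M : M 1 0 = M 0 1 -> lambda_min M = lminf M.
Proof.
move=> hs; rewrite /lambda_min; apply: xget_unique.
  split; first exact: lminf_eig.
  by move=> m /(eig_bounds _ _ hs) /andP[].
move=> y [ey hy]; apply/eqP; rewrite eq_le; apply/andP; split.
  exact: hy (lminf_eig _ hs).
by case/andP: (eig_bounds _ _ hs ey).
Qed.

Lemma lambda_maxE M : M 1 0 = M 0 1 -> lambda_max M = lmaxf M.
Proof.
move=> hs; rewrite /lambda_max; apply: xget_unique.
  split; first exact: lmaxf_eig.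
  by move=> m /(eig_bounds _ _ hs) /andP[].
move=> y [ey hy]; apply/eqP; rewrite eq_le; apply/andP; split.
  by case/andP: (eig_bounds _ _ hs ey).
exact: hy (lmaxf_eig _ hs).
Qed.

Lemma lminf_ge M m : M 0 0 + M 1 1 - 2 * m >= 0 ->
  m^+2 - (M 0 0 + M 1 1) * m + (M 0 0 * M 1 1 - M 0 1 ^+ 2) >= 0 -> m <= lminf M.
Proof.
move=> h1 h2.
have r0 := sqrtr_ge0 (disc M).
have r2 := sqr_sqrtr (disc_ge0 M).
have e := quad_id M m.
rewrite /lminf; move: (Num.sqrt (disc M)) r0 r2 => r r0 r2.
rewrite -r2 in e.
set p := (M 0 0 + M 1 1) / 2 - m.
have hp : 0 <= p by rewrite /p; lra.
have e2 : (M 0 0 - m) * (M 1 1 - m) - M 0 1 ^+ 2 = m ^+ 2 - (M 0 0 + M 1 1) * m + (M 0 0 * M 1 1 - M 0 1 ^+ 2) by ring.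
have e3 : (m - (M 0 0 + M 1 1) / 2) ^+ 2 = p^+2 by rewrite /p; ring.
have hq : r^+2 <= p^+2 by lra.
have : r <= p by rewrite -(ler_pXn2r (n := 2)) // nnegrE.
rewrite /p; lra.
Qed.

Lemma lmin_lmax M : lminf M + lmaxf M = M 0 0 + M 1 1.
Proof. by rewrite /lminf /lmaxf; field. Qed.

Lemma lmin_le_lmax M : lminf M <= lmaxf M.
Proof. have := sqrtr_ge0 (disc M); rewrite /lminf /lmaxf; lra. Qed.

Lemma lmin_mul_lmax M : lminf M * lmaxf M = M 0 0 * M 1 1 - M 0 1 ^+ 2.
Proof.
rewrite /lminf /lmaxf.
have r2 := sqr_sqrtr (disc_ge0 M).
set r := Num.sqrt _ in r2 *.
have -> : ((M 0 0 + M 1 1) / 2 - r) * ((M 0 0 + M 1 1) / 2 + r) = ((M 0 0 + M 1 1) / 2)^+2 - r^+2 by ring.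
by rewrite r2 /disc; field.
Qed.

Lemma ord2_cases (i : 'I_2) : i = 0 \/ i = 1.
Proof. case: i => [[|[|k]]] H; [left|right|by []]; exact: val_inj. Qed.

Lemma psd_of M : M 1 0 = M 0 1 -> 0 <= lminf M -> psd2 M.
Proof.
move=> hs h; split.
  apply/matrixP => i j; rewrite mxE.
  by case: (ord2_cases i) => ->; case: (ord2_cases j) => ->.
move=> x.
have e : (x *m M *m x^T) 0 0 = M 0 0 * x 0 0 ^+ 2 + 2 * M 0 1 * x 0 0 * x 0 1 + M 1 1 * x 0 1 ^+ 2.
  rewrite mxE !big_ord_recl big_ord0 !mulrow2 !mxE l12 hs; ring.
rewrite e.
have h1 := lmin_le_lmax M; have h2 := lmin_lmax M; have h3 := lmin_mul_lmax M.
move: h1 h2 h3 h; set a := M 0 0; set b := M 0 1; set c := M 1 1.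
set l1 := lminf M; set l2 := lmaxf M; move=> h1 h2 h3 h.
have T0 : 0 <= a + c by lra.
have D0 : 0 <= a * c - b ^+ 2 by rewrite -h3; apply: mulr_ge0; lra.
have bb := sqr_ge0 b.
have a0 : 0 <= a.
  rewrite leNgt; apply/negP => ha.
  have hc : 0 < c by lra.
  have : a * c < 0 by rewrite pmulr_llt0.
  lra.
have c0 : 0 <= c.
  rewrite leNgt; apply/negP => hc.
  have ha : 0 < a by lra.
  have : a * c < 0 by rewrite pmulr_rlt0.
  lra.
set x0 := x 0 0; set x1 := x 0 1.
have key : (a + c) * (a * x0 ^+ 2 + 2 * b * x0 * x1 + c * x1 ^+ 2)
   = (a * x0 + b * x1)^+2 + (b * x0 + c * x1)^+2 + (a * c - b^+2) * (x0^+2 + x1^+2) by ring.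
have [Tz|Tp] := eqVneq (a + c) 0.
  have az : a = 0 by lra.
  have cz : c = 0 by lra.
  have bz : b ^+ 2 = 0 by apply/eqP; rewrite eq_le sqr_ge0 andbT; move: D0; rewrite az cz; lra.
  have -> : b = 0 by move/eqP: bz; rewrite sqrf_eq0 => /eqP.
  rewrite az cz; lra.
have Tp' : 0 < a + c by rewrite lt_def Tp.
rewrite -(pmulr_rge0 _ Tp') key.
apply: addr_ge0; first by apply: addr_ge0; apply: sqr_ge0.
apply: mulr_ge0 => //; apply: addr_ge0; apply: sqr_ge0.
Qed.

End SB.


Section SD.
Context {R : realType}.

Lemma frame_of (a b c l Lm v1 v2 : R) : v1^+2 + v2^+2 = 1 ->
  v1 * a + v2 * b = l * v1 -> v1 * b + v2 * c = l * v2 -> Lm = a + c - l ->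
  [/\ a = l * v1^+2 + Lm * v2^+2, b = (l - Lm) * v1 * v2 & c = l * v2^+2 + Lm * v1^+2].
Proof.
move=> hv e0 e1 ->; split; apply/eqP; rewrite -subr_eq0; apply/eqP.
- have -> : a - (l * v1 ^+ 2 + (a + c - l) * v2 ^+ 2) = a * (1 - (v1^+2 + v2^+2))
     + v1 * (v1 * a + v2 * b - l * v1) - v2 * (v1 * b + v2 * c - l * v2) by ring.
  by rewrite hv e0 e1 !subrr; ring.
- have -> : b - (l - (a + c - l)) * v1 * v2 = b * (1 - (v1^+2 + v2^+2))
     + v2 * (v1 * a + v2 * b - l * v1) + v1 * (v1 * b + v2 * c - l * v2) by ring.
  by rewrite hv e0 e1 !subrr; ring.
- have -> : c - (l * v2 ^+ 2 + (a + c - l) * v1 ^+ 2) = c * (1 - (v1^+2 + v2^+2))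
     - v1 * (v1 * a + v2 * b - l * v1) + v2 * (v1 * b + v2 * c - l * v2) by ring.
  by rewrite hv e0 e1 !subrr; ring.
Qed.

Lemma frame_step (v1 v2 l Lm al d s ip im w a b c c1 c2 : R) :
 v1^+2 + v2^+2 = 1 ->
 a = l * v1^+2 + Lm * v2^+2 -> b = (l - Lm) * v1 * v2 -> c = l * v2^+2 + Lm * v1^+2 ->
 c1 = d * v1 - al * v2 -> c2 = d * v2 + al * v1 ->
 let a' := a + w * (ip * ((c1 + s * v1) * (c1 + s * v1)) + im * ((c1 - s * v1) * (c1 - s * v1))) in
 let b' := b + w * (ip * ((c1 + s * v1) * (c2 + s * v2)) + im * ((c1 - s * v1) * (c2 - s * v2))) in
 let c' := c + w * (ip * ((c2 + s * v2) * (c2 + s * v2)) + im * ((c2 - s * v2) * (c2 - s * v2))) in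
 a' + c' = Lm + l + w*(al^+2*(ip+im) + ((d+s)^+2*ip + (d-s)^+2*im)) /\
 a' * c' - b'^+2 = (Lm + w*(al^+2*(ip+im)))*(l + w*((d+s)^+2*ip + (d-s)^+2*im))
            - (w*(al*((d+s)*ip + (d-s)*im)))^+2.
Proof.
move=> hv -> -> -> -> -> a' b' c'; split.
  have E : a' + c' = (v1^+2 + v2^+2) * (Lm + l + w*(al^+2*(ip+im) + ((d+s)^+2*ip + (d-s)^+2*im))).
    by rewrite /a' /c'; ring.
  by rewrite E hv mul1r.
have E : a' * c' - b'^+2 = (v1^+2 + v2^+2)^+2 * ((Lm + w*(al^+2*(ip+im)))*(l + w*((d+s)^+2*ip + (d-s)^+2*im))
            - (w*(al*((d+s)*ip + (d-s)*im)))^+2).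
  by rewrite /a' /b' /c'; ring.
by rewrite E hv expr1n mul1r.
Qed.


Lemma entry_step (M : 'M[R]_2) (w s kp km : R) (cc v : 'rV[R]_2) i j :
 (M + w *: (outer (kp *: (cc + s *: v)) + outer (km *: (cc - s *: v)))) i j
 = M i j + w * (kp^+2 * ((cc 0 i + s * v 0 i) * (cc 0 j + s * v 0 j))
              + km^+2 * ((cc 0 i - s * v 0 i) * (cc 0 j - s * v 0 j))).
Proof. rewrite !mxE !big_ord1 !mxE; ring. Qed.

Lemma npos (al d s : R) : al^+2 + d^+2 = 1 -> s^+2 < 1 ->
  0 < al^+2 + (d+s)^+2 /\ 0 < al^+2 + (d-s)^+2.
Proof.
move=> ad s2lt; split.
  rewrite ltNge; apply/negP => h.
  have a0 : al^+2 = 0 by apply/eqP; rewrite eq_le sqr_ge0 andbT; have := sqr_ge0 (d+s); lra.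
  have b0 : (d+s)^+2 = 0 by apply/eqP; rewrite eq_le sqr_ge0 andbT; have := sqr_ge0 al; lra.
  have : d + s = 0 by apply/eqP; rewrite -sqrf_eq0; apply/eqP.
  move=> e; have : d = - s by lra.
  move=> e'; move: ad; rewrite a0 e' sqrrN; lra.
rewrite ltNge; apply/negP => h.
have a0 : al^+2 = 0 by apply/eqP; rewrite eq_le sqr_ge0 andbT; have := sqr_ge0 (d-s); lra.
have b0 : (d-s)^+2 = 0 by apply/eqP; rewrite eq_le sqr_ge0 andbT; have := sqr_ge0 al; lra.
have : d - s = 0 by apply/eqP; rewrite -sqrf_eq0; apply/eqP.
move=> e; have : d = s by lra.
move=> e'; move: ad; rewrite a0 e'; lra.
Qed.

Lemma mat_step (C l0 w : R) (M : 'M[R]_2) (cc v : 'rV[R]_2) :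
  0 < C -> 4 * Num.sqrt 2 * C + 2 <= l0 -> M 1 0 = M 0 1 -> l0 <= lminf M ->
  2 * lmaxf M <= lminf M ^+ 2 ->
  dot2 cc cc = 1 -> dot2 v v = 1 -> v *m M = lminf M *: v ->
  0 <= w -> w <= C * Num.sqrt (lmaxf M) ->
  let M' := M + w *: (outer (a_plus cc v (lminf M)) + outer (a_minus cc v (lminf M))) in
  [/\ M' 1 0 = M' 0 1, l0 <= lminf M' & 2 * lmaxf M' <= lminf M' ^+ 2].
Proof.
move=> C0 hl0 hs hl hL hcn hvn hve w0 wC.
have r2 := sqrtr_ge0 (2:R).
have C0' : 0 <= 4 * Num.sqrt 2 * C by apply: mulr_ge0; [apply: mulr_ge0|apply: ltW].
have e0 : (v *m M) 0 0 = (lminf M *: v) 0 0 by rewrite hve.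
have e1 : (v *m M) 0 1 = (lminf M *: v) 0 1 by rewrite hve.
rewrite mulrow2 mxE hs in e0; rewrite mulrow2 mxE in e1.
have hLl := lmin_le_lmax M.
have hT := lmin_lmax M.
rewrite dot2E -!expr2 in hcn; rewrite dot2E -!expr2 in hvn.
move: hl hL e0 e1 hLl hT wC.
rewrite /a_plus /a_minus.
set l := lminf M; set Lm := lmaxf M.
move=> hl hL e0 e1 hLl hT wC.
have lpos : 0 < l by lra.
rewrite dot2E.
set v1 := v 0 0; set v2 := v 0 1; set c1 := cc 0 0; set c2 := cc 0 1.
set d := c1 * v1 + c2 * v2.
set al := c2 * v1 - c1 * v2.
set np := 1 + 2 * d / Num.sqrt l + 1 / l.
set nm := 1 - 2 * d / Num.sqrt l + 1 / l.
set s := (Num.sqrt l)^-1.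
set kp := (Num.sqrt np)^-1; set km := (Num.sqrt nm)^-1.
set M' := (M + w *: _).
have s0 : 0 < s by rewrite /s invr_gt0 sqrtr_gt0.
have sl : s^+2 * l = 1 by rewrite /s exprVn sqr_sqrtr ?(ltW lpos) // mulVf // gt_eqF.
have s2lt : s^+2 < 1.
  have h1 : 0 <= l - 2 by lra.
  have h2 := mulr_ge0 (sqr_ge0 s) h1.
  have h3 : s ^+ 2 * (l - 2) = s^+2 * l - 2 * s^+2 by ring.
  lra.
have ad : al^+2 + d^+2 = 1.
  have -> : al^+2 + d^+2 = (c1^+2 + c2^+2) * (v1^+2 + v2^+2) by rewrite /al /d; ring.
  by rewrite hcn hvn mulr1.
have Enp : np = al^+2 + (d+s)^+2.
  rewrite /np /s.
  have -> : 1 / l = s^+2 by rewrite /s exprVn sqr_sqrtr ?(ltW lpos) // div1r.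
  rewrite -/s; lra.
have Enm : nm = al^+2 + (d-s)^+2.
  rewrite /nm /s.
  have -> : 1 / l = s^+2 by rewrite /s exprVn sqr_sqrtr ?(ltW lpos) // div1r.
  rewrite -/s; lra.
have [np0 nm0] := npos _ _ _ ad s2lt.
rewrite -Enp in np0; rewrite -Enm in nm0.
have hip : kp^+2 * (al^+2 + (d+s)^+2) = 1.
  by rewrite -Enp /kp exprVn sqr_sqrtr ?(ltW np0) // mulVf // gt_eqF.
have him : km^+2 * (al^+2 + (d-s)^+2) = 1.
  by rewrite -Enm /km exprVn sqr_sqrtr ?(ltW nm0) // mulVf // gt_eqF.
have hLm : Lm = M 0 0 + M 1 1 - l by lra.
have [Ha Hb Hc] := frame_of _ _ _ _ _ _ _ hvn e0 e1 hLm.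
have Hc1 : c1 = d * v1 - al * v2.
  have -> : d * v1 - al * v2 = c1 * (v1^+2 + v2^+2) by rewrite /d /al; ring.
  by rewrite hvn mulr1.
have Hc2 : c2 = d * v2 + al * v1.
  have -> : d * v2 + al * v1 = c2 * (v1^+2 + v2^+2) by rewrite /d /al; ring.
  by rewrite hvn mulr1.
have [ET ED] := frame_step _ _ _ _ _ _ s (kp^+2) (km^+2) w _ _ _ _ _ hvn Ha Hb Hc Hc1 Hc2.
have [m [lm [m1 [m2 m3]]]] := step_ineq _ _ _ _ _ _ _ _ _ _ C0 hl0 hl hLl hL w0 wC ad s0 sl hip him.
have hs' : M' 1 0 = M' 0 1 by rewrite /M' !entry_step hs; ring.
have E00 := entry_step M w s kp km cc v 0 0.
have E01 := entry_step M w s kp km cc v 0 1.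
have E11 := entry_step M w s kp km cc v 1 1.
rewrite -/M' -/v1 -/v2 -/c1 -/c2 in E00 E01 E11.
have T' : M' 0 0 + M' 1 1 = Lm + l + w * (al ^+ 2 * (kp ^+ 2 + km ^+ 2) + ((d + s) ^+ 2 * kp ^+ 2 + (d - s) ^+ 2 * km ^+ 2)).
  by rewrite E00 E11 -ET.
have D' : M' 0 0 * M' 1 1 - M' 0 1 ^+ 2 = (Lm + w * (al ^+ 2 * (kp ^+ 2 + km ^+ 2))) *
       (l + w * ((d + s) ^+ 2 * kp ^+ 2 + (d - s) ^+ 2 * km ^+ 2)) -
       (w * (al * ((d + s) * kp ^+ 2 + (d - s) * km ^+ 2))) ^+ 2.
  by rewrite E00 E11 E01 -ED.
have hm : m <= lminf M'.
  apply: lminf_ge; rewrite ?T' ?D'; lra.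
have hT' := lmin_lmax M'.
split => //; first lra.
have : 2 * (lminf M' + lmaxf M') <= m ^+ 2 + 2 * m by rewrite hT' T'.
have : m ^+ 2 <= lminf M' ^+ 2 by rewrite ler_pXn2r // nnegrE; lra.
lra.
Qed.

End SD.

Theorem mainTheorem9 (R : realType) (c : nat -> 'rV[R]_2)
  (omega : 'M[R]_2 -> R) (C lambda0 : R)
  (V : nat -> 'M[R]_2) (vmin : nat -> 'rV[R]_2) :
  (forall t, dot2 (c t) (c t) = 1) ->
  0 < C ->
  (forall X, psd2 X -> 0 <= omega X /\ omega X <= C * Num.sqrt (lambda_max X)) ->
  4 * Num.sqrt 2 * C + 2 <= lambda0 ->
  V 0%N = lambda0%:M ->
  (forall t, dot2 (vmin t) (vmin t) = 1 /\
             vmin t *m V t = lambda_min (V t) *: vmin t) ->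
  (forall t, V t.+1 = V t + omega (V t) *:
      (outer (a_plus (c t) (vmin t) (lambda_min (V t)))
       + outer (a_minus (c t) (vmin t) (lambda_min (V t))))) ->
  forall t, Num.sqrt (2 * lambda_max (V t)) <= lambda_min (V t).
Proof.
move=> hc C0 hom hl0 V0 hv hV.
have r2 := sqrtr_ge0 (2:R).
have C0' : 0 <= 4 * Num.sqrt 2 * C by apply: mulr_ge0; [apply: mulr_ge0|apply: ltW].
have l02 : 2 <= lambda0 by lra.
have inv : forall t, [/\ V t 1 0 = V t 0 1, lambda0 <= lminf (V t)
                       & 2 * lmaxf (V t) <= lminf (V t) ^+ 2].
  elim => [|t [hs hl hL]].
    have dz : disc (V 0%N) = 0 by rewrite /disc V0 !mxE /=; ring.
    rewrite /lminf /lmaxf dz sqrtr0 V0 !mxE /=.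
    split; [by []| lra | nra].
  have [hvn hve] := hv t.
  have hVt := hV t.
  rewrite (lambda_minE _ hs) in hve hVt.
  have lnn : 0 <= lminf (V t) by lra.
  have psdM := psd_of _ hs lnn.
  have [w0 wC] := hom _ psdM.
  rewrite (lambda_maxE _ hs) in wC.
  rewrite hVt.
  exact: (mat_step _ _ _ _ _ _ C0 hl0 hs hl hL (hc t) hvn hve w0 wC).
move=> t; case: (inv t) => hs hl hL.
rewrite (lambda_maxE _ hs) (lambda_minE _ hs).
have l0 : 0 <= lminf (V t) by lra.
rewrite -(ger0_norm l0) -sqrtr_sqr ler_wsqrtr //.
Qed.
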